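(* Let $V$ be a finite-dimensional vector space over an algebraically closed field $k$, let $G = \mathrm{GL}(V)$, and let $H$ and $K$ be subgroups of $G$, with $K$ reductive, which both preserve a direct-sum decomposition $V = \bigoplus_{i=1}^n V_i$. Suppose also that $K = K_1 \times \cdots \times K_n$ where $K_i \le \mathrm{GL}(V_i)$ for each $i$ (with $K_i$ regarded as a subgroup of $G$ acting trivially on $V_j$ for $j\neq i$). Then $H$ is relatively $G$-completely reducible with respect to $K$ if and only if $H$ is relatively $G$-completely reducible with respect to $K_i$ for all $i$.
   Context: For a cocharacter $\lambda$ of $G$, $P_\lambda = \{g \in G \mid \lim_{a\to 0}\lambda(a)g\lambda(a)^{-1} \text{ exists}\}$ and $L_\lambda = \{g \in G \mid \lim_{a\to 0}\lambda(a)g\lambda(a)^{-1} = g\}$. For a reductive subgroup $M$ of $G$, $H$ is relatively $G$-completely reducible with respect to $M$ if for every cocharacter $\lambda$ of $M$ with $H \subseteq P_\lambda$ there is a cocharacter $\mu$ of $M$ with $P_\lambda = P_\mu$ and $H \subseteq L_\mu$. *)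

(* Defs.v *)
(* Linear algebraic groups inside GL_N(k), k algebraically
   closed, V = k^N as row vectors (g acts by v |-> v *m g). *)
From HB Require Import structures.
From mathcomp Require Import all_boot all_order all_algebra all_field.
From mathcomp Require Import mpoly.
Set Implicit Arguments. Unset Strict Implicit. Unset Printing Implicit Defensive.
Import GRing.Theory.
Local Open Scope ring_scope.

Section AlgGroups.
Variables (k : closedFieldType) (N : nat).

Definition mxset := 'M[k]_N -> Prop.

Definition subgroup (H : mxset) : Prop :=
  [/\ forall g, H g -> g \in unitmx,
      H 1%:M,
      forall g h, H g -> H h -> H (g *m h)
    & forall g, H g -> H (invmx g)].

Definition mxcoords (g : 'M[k]_N) : 'I_(N * N) -> k := fun i => mxvec g 0 i.

(* Zariski-closed subset of GL_N(k): intersection of GL_N with the zero set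
   of a family of polynomials in the matrix entries *)
Definition zclosed (A : mxset) : Prop :=
  exists S : {mpoly k[N * N]} -> Prop,
    forall g, A g <-> (g \in unitmx /\ forall p, S p -> p.@[mxcoords g] = 0).

Definition zconnected (A : mxset) : Prop :=
  forall C1 C2 : mxset, zclosed C1 -> zclosed C2 ->
    (forall g, A g -> C1 g \/ C2 g) ->
    (forall g, A g -> C1 g -> C2 g -> False) ->
    (forall g, A g -> C1 g) \/ (forall g, A g -> C2 g).

Definition unipotent (g : 'M[k]_N) : Prop :=
  exists m : nat, iter m (mulmx (g - 1%:M)) 1%:M = 0.

Definition normal_in (U M : mxset) : Prop :=
  forall m u, M m -> U u -> U (invmx m *m u *m m).

(* reductive subgroup: closed subgroup whose unipotent radical is trivial,
   i.e. every closed connected normal unipotent subgroup is trivial *)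
Definition reductive (M : mxset) : Prop :=
  [/\ subgroup M, zclosed M &
      forall U : mxset, subgroup U -> (forall u, U u -> M u) -> zclosed U ->
        zconnected U -> normal_in U M -> (forall u, U u -> unipotent u) ->
        forall u, U u -> u = 1%:M].

Definition evalmx (Q : 'M[{poly k}]_N) (a : k) : 'M[k]_N :=
  map_mx (fun p => p.[a]) Q.

(* cocharacter G_m -> GL_N: a homomorphism k^x -> GL_N(k) that is a morphism
   of varieties (entries are Laurent polynomials in a) *)
Definition cocharacter (lam : k -> 'M[k]_N) : Prop :=
  [/\ exists (e : nat) (P : 'M[{poly k}]_N),
        forall a, a != 0 -> lam a = (a ^+ e)^-1 *: evalmx P a,
      forall a, a != 0 -> lam a \in unitmx
    & forall a b, a != 0 -> b != 0 -> lam (a * b) = lam a *m lam b].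

Definition cocharacter_of (M : mxset) (lam : k -> 'M[k]_N) : Prop :=
  cocharacter lam /\ forall a, a != 0 -> M (lam a).

(* lim_{a -> 0} lam(a) g lam(a)^-1 exists and equals L: the morphism
   a |-> lam(a) g lam(a)^-1 on G_m extends to a morphism A^1 -> GL_N
   whose value at 0 is L *)
Definition limit_is (lam : k -> 'M[k]_N) (g L : 'M[k]_N) : Prop :=
  exists Q : 'M[{poly k}]_N,
    [/\ forall a, a != 0 -> lam a *m g *m invmx (lam a) = evalmx Q a,
        L = evalmx Q 0 & L \in unitmx].

Definition Pl (lam : k -> 'M[k]_N) : mxset :=
  fun g => g \in unitmx /\ exists L, limit_is lam g L.

Definition Ll (lam : k -> 'M[k]_N) : mxset :=
  fun g => g \in unitmx /\ limit_is lam g g.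

Definition rel_Gcr (H M : mxset) : Prop :=
  forall lam, cocharacter_of M lam -> (forall h, H h -> Pl lam h) ->
    exists mu, [/\ cocharacter_of M mu, (forall g, Pl lam g <-> Pl mu g)
                 & forall h, H h -> Ll mu h].

End AlgGroups.

(* Main.v *)
Require Import Defs.
From HB Require Import structures.
From mathcomp Require Import all_boot all_order all_algebra all_field.
From mathcomp Require Import mpoly.
From mathcomp Require Import zify.
Set Implicit Arguments. Unset Strict Implicit. Unset Printing Implicit Defensive.
Import GRing.Theory.
Local Open Scope ring_scope.

Section Aux.
Variables (k : closedFieldType) (N : nat).
Implicit Types (A B g : 'M[k]_N) (Q : 'M[{poly k}]_N).

Lemma poly_vanish (p : {poly k}) : (forall a : k, a != 0 -> p.[a] = 0) -> p = 0.
Proof.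
move=> H.
have Hq : forall a, (p * 'X).[a] = 0.
  move=> a; rewrite hornerM hornerX; have [->|/H ->] := eqVneq a 0.
    by rewrite mulr0.
  by rewrite mul0r.
have hs : size (p * 'X + 1) == 1%N.
  apply: contraT => /closed_rootP [x]; rewrite /root hornerD Hq hornerC add0r.
  by rewrite oner_eq0.
have hle : (size (p * 'X + 1)%R <= 1)%N by rewrite (eqP hs).
have hc := size1_polyC hle; apply/polyP => i; rewrite coef0.
have := congr1 (fun q : {poly k} => q`_i.+1) hc.
by rewrite /= coefD coefMX !coefC /= addr0.
Qed.

Definition cmx A : 'M[{poly k}]_N := map_mx polyC A.

Lemma evalmxE Q a : evalmx Q a = map_mx (horner_eval a) Q.
Proof. by []. Qed.

Lemma evalmx_cmx A a : evalmx (cmx A) a = A.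
Proof. by apply/matrixP => i j; rewrite !mxE hornerC. Qed.

Lemma evalmxM Q1 Q2 a : evalmx (Q1 *m Q2) a = evalmx Q1 a *m evalmx Q2 a.
Proof. by rewrite !evalmxE map_mxM. Qed.

Lemma evalmxD Q1 Q2 a : evalmx (Q1 + Q2) a = evalmx Q1 a + evalmx Q2 a.
Proof. by rewrite !evalmxE map_mxD. Qed.

Lemma evalmxB Q1 Q2 a : evalmx (Q1 - Q2) a = evalmx Q1 a - evalmx Q2 a.
Proof. by rewrite !evalmxE map_mxB. Qed.

Lemma evalmxZ (p : {poly k}) Q a : evalmx (p *: Q) a = p.[a] *: evalmx Q a.
Proof. by rewrite !evalmxE map_mxZ. Qed.

Lemma evalmx_sum (I : Type) (r : seq I) (P : pred I) (F : I -> 'M[{poly k}]_N) a :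
  evalmx (\sum_(i <- r | P i) F i) a = \sum_(i <- r | P i) evalmx (F i) a.
Proof.
by apply/matrixP => i j; rewrite !mxE !summxE horner_sum; apply: eq_bigr => x _; rewrite mxE.
Qed.

Lemma mx_vanish D (C : nat -> 'M[k]_N) :
  (forall a, a != 0 -> \sum_(d < D) a ^+ d *: C d = 0) -> forall d, (d < D)%N -> C d = 0.
Proof.
move=> H d hd; apply/matrixP => i j; rewrite mxE.
set p := \poly_(d < D) (C d i j).
have : p = 0.
  apply: poly_vanish => a /H /matrixP /(_ i j) h0; rewrite horner_poly.
  rewrite mxE summxE in h0; apply: etrans h0.
  by apply: eq_bigr => x _; rewrite !mxE mulrC.
by move/(congr1 (fun q : {poly k} => q`_d)); rewrite coef_poly hd coef0.
Qed.

Lemma sum_delta D d (F : nat -> 'M[k]_N) : (d < D)%N ->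
  \sum_(d' < D) (if d == (d' : nat) then F d' else 0) = F d.
Proof.
move=> hd; rewrite (bigD1 (Ordinal hd)) //= eqxx big1 ?addr0 //.
move=> i hi; case: eqP => // hdi; case/negP: hi; apply/eqP/val_inj => /=; by rewrite hdi.
Qed.

Lemma sum_delta' D d (F : nat -> 'M[k]_N) : (d < D)%N ->
  \sum_(d' < D) (if (d' : nat) == d then F d' else 0) = F d.
Proof.
move=> hd; rewrite -(sum_delta F hd); apply: eq_bigr => i _; by rewrite eq_sym.
Qed.

Definition grading (e D : nat) (E : nat -> 'M[k]_N) (c : k -> 'M[k]_N) :=
  [/\ forall d d', (d < D)%N -> (d' < D)%N -> E d *m E d' = if d == d' then E d else 0,
      \sum_(d < D) E d = 1%:M
    & forall a, a != 0 -> c a = (a ^+ e)^-1 *: \sum_(d < D) a ^+ d *: E d].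

Lemma unit1_idem A : A \in unitmx -> A = A *m A -> A = 1%:M.
Proof.
move=> hu hA; have : invmx A *m A = invmx A *m (A *m A) by rewrite -hA.
by rewrite mulmxA mulVmx // mul1mx => ->.
Qed.

Lemma grading_exists (c : k -> 'M[k]_N) : cocharacter c -> exists e D E, grading e D E c.
Proof.
case=> [[e [P hP]] hu hm].
set D := (\max_(ij : 'I_N * 'I_N) size (P ij.1 ij.2))%N.
pose E := fun d => \matrix_(i, j) (P i j)`_d.
have hPa : forall a, evalmx P a = \sum_(d < D) a ^+ d *: E d.
  move=> a; apply/matrixP=> i j; rewrite !mxE summxE.
  rewrite (horner_coef_wide a (leq_bigmax (F := fun ij : 'I_N * 'I_N => size (P ij.1 ij.2)) (i, j))).
  by apply: eq_bigr => d _; rewrite !mxE mulrC.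
have hPm : forall a b, a != 0 -> b != 0 -> evalmx P (a * b) = evalmx P a *m evalmx P b.
  move=> a b ha hb; have := hm a b ha hb; rewrite !hP ?mulf_neq0 // -scalemxAl -scalemxAr scalerA.
  rewrite exprMn invfM => h; apply: (scalerI _ h).
  by rewrite mulf_neq0 // invr_eq0 expf_neq0.
have hEb : forall b d, b != 0 -> (d < D)%N -> b ^+ d *: E d = E d *m evalmx P b.
  move=> b d hb hd; apply/eqP; rewrite -subr_eq0; apply/eqP.
  apply: (@mx_vanish D (fun d => b ^+ d *: E d - E d *m evalmx P b) _ d hd) => a ha.
  have := hPm a b ha hb; rewrite !hPa mulmx_suml => h.
  rewrite -[RHS](subrr (\sum_(d < D) a ^+ d *: E d *m \sum_(d < D) b ^+ d *: E d)).
  rewrite -{1}h -sumrB; apply: eq_bigr => d' _.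
  by rewrite exprMn scalerBr scalerA scalemxAl.
have hEE : forall d d', (d < D)%N -> (d' < D)%N -> E d *m E d' = if d == d' then E d else 0.
  move=> d d' hd hd'.
  have := @mx_vanish D (fun d' => (if d == d' then E d else 0) - E d *m E d').
  move=> h; apply/eqP; rewrite eq_sym -subr_eq0; apply/eqP; apply: h hd' => b hb.
  have := hEb b d hb hd; rewrite hPa mulmx_sumr => h.
  rewrite -[RHS](subrr (b ^+ d *: E d)) {2}h -{1}(sum_delta (fun d' => b ^+ d' *: E d) hd).
  rewrite -sumrB; apply: eq_bigr => i _.
  by rewrite scalerBr -scalemxAr; case: eqP => //; rewrite scaler0.
have h1 : c 1 = 1%:M.
  apply: unit1_idem; first exact: hu (oner_neq0 _).
  by rewrite -hm ?oner_neq0 // mulr1.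
exists e, D, E; split => //.
rewrite -h1 hP ?oner_neq0 // expr1n invr1 scale1r hPa.
by apply: eq_bigr => d _; rewrite expr1n scale1r.
move=> a ha; by rewrite hP // hPa.
Qed.

End Aux.
Section Grad.
Variables (k : closedFieldType) (N : nat).
Implicit Types (A B g X : 'M[k]_N) (Q : 'M[{poly k}]_N).

Lemma evalmx_entry (M : 'M[{poly k}]_N) i j a : (evalmx M a) i j = (M i j).[a].
Proof. by rewrite /evalmx mxE. Qed.

Definition limQ (c : k -> 'M[k]_N) g Q :=
  forall a, a != 0 -> c a *m g *m invmx (c a) = evalmx Q a.

Lemma limQ_det (c : k -> 'M[k]_N) g Q : (forall a, a != 0 -> c a \in unitmx) ->
  limQ c g Q -> \det (evalmx Q 0) = \det g.
Proof.
move=> hu hl.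
have : \det Q - (\det g)%:P = 0.
  apply: poly_vanish => a ha; rewrite hornerD hornerN hornerC.
  have -> : (\det Q).[a] = \det (evalmx Q a) by rewrite evalmxE det_map_mx.
  rewrite -hl // !det_mulmx det_inv mulrC mulrA mulVf ?mul1r ?subrr //.
  by have := hu a ha; rewrite unitmxE unitfE.
move/(congr1 (fun p => p.[0])); rewrite hornerD hornerN hornerC horner0.
rewrite evalmxE det_map_mx /= => /eqP; rewrite subr_eq0 => /eqP.
by rewrite horner_evalE.
Qed.

Lemma limQ_unit (c : k -> 'M[k]_N) g Q : (forall a, a != 0 -> c a \in unitmx) ->
  g \in unitmx -> limQ c g Q -> evalmx Q 0 \in unitmx.
Proof. by move=> hu hg hl; rewrite unitmxE (limQ_det hu hl) -unitmxE. Qed.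

Lemma limit_isE (c : k -> 'M[k]_N) g L : (forall a, a != 0 -> c a \in unitmx) ->
  g \in unitmx -> (limit_is c g L <-> exists Q, limQ c g Q /\ L = evalmx Q 0).
Proof.
move=> hu hg; split; first by case=> Q [h1 h2 h3]; exists Q.
by case=> Q [h1 h2]; exists Q; split => //; rewrite h2 (limQ_unit hu hg h1).
Qed.

Lemma PlE (c : k -> 'M[k]_N) g : (forall a, a != 0 -> c a \in unitmx) ->
  Pl c g <-> g \in unitmx /\ exists Q, limQ c g Q.
Proof.
move=> hu; split.
  by case=> hg [L /(limit_isE L hu hg) [Q [hQ _]]]; split => //; exists Q.
case=> hg [Q hQ]; split => //; exists (evalmx Q 0).
by apply/(limit_isE _ hu hg); exists Q.
Qed.

Lemma LlE (c : k -> 'M[k]_N) g : (forall a, a != 0 -> c a \in unitmx) ->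
  Ll c g <-> g \in unitmx /\ exists Q, limQ c g Q /\ evalmx Q 0 = g.
Proof.
move=> hu; split.
  by case=> hg /(limit_isE g hu hg) [Q [hQ hL]]; split => //; exists Q; split.
case=> hg [Q [hQ h0]]; split => //.
by apply/(limit_isE _ hu hg); exists Q.
Qed.

Lemma limQ_ext (c c' : k -> 'M[k]_N) g Q : (forall a, a != 0 -> c a = c' a) ->
  limQ c g Q -> limQ c' g Q.
Proof. by move=> h hl a ha; rewrite -h // hl. Qed.

Lemma Pl_ext (c c' : k -> 'M[k]_N) g : (forall a, a != 0 -> c a = c' a) ->
  Pl c g -> Pl c' g.
Proof.
move=> h [hg [L [Q [h1 h2 h3]]]]; split => //; exists L; exists Q; split => //.
exact: limQ_ext h1.
Qed.

Lemma Ll_ext (c c' : k -> 'M[k]_N) g : (forall a, a != 0 -> c a = c' a) ->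
  Ll c g -> Ll c' g.
Proof.
move=> h [hg [Q [h1 h2 h3]]]; split => //; exists Q; split => //.
exact: limQ_ext h1.
Qed.

Lemma Ll_Pl (c : k -> 'M[k]_N) g : Ll c g -> Pl c g.
Proof. by case=> hg hl; split => //; exists g. Qed.

Variables (e D : nat) (E : nat -> 'M[k]_N) (c : k -> 'M[k]_N).
Hypothesis hg : grading e D E c.

Lemma gE_mulr (a : k) r : (r < D)%N -> E r *m (\sum_(d < D) a ^+ d *: E d) = a ^+ r *: E r.
Proof.
case: hg => hE _ _ hr; rewrite mulmx_sumr.
rewrite -(sum_delta (fun d => a ^+ d *: E r) hr); apply: eq_bigr => d _.
by rewrite -scalemxAr hE //; case: eqP => [->|]; rewrite ?scaler0.
Qed.

Lemma gE_mull (a : k) r : (r < D)%N -> (\sum_(d < D) a ^+ d *: E d) *m E r = a ^+ r *: E r.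
Proof.
case: hg => hE _ _ hr; rewrite mulmx_suml.
rewrite -(sum_delta' (fun d => a ^+ d *: E r) hr); apply: eq_bigr => d _.
by rewrite -scalemxAl hE //; case: eqP => [->|]; rewrite ?scaler0.
Qed.

Lemma g_inv a : a != 0 -> c a \in unitmx /\
  invmx (c a) = a ^+ e *: \sum_(d < D) a^-1 ^+ d *: E d.
Proof.
case: hg => hE h1 hc ha.
have hm : c a *m (a ^+ e *: \sum_(d < D) a^-1 ^+ d *: E d) = 1%:M.
  rewrite hc // -scalemxAl -scalemxAr scalerA mulVf ?expf_neq0 // scale1r.
  rewrite mulmx_suml -h1; apply: eq_bigr => d _.
  rewrite -scalemxAl gE_mulr // scalerA -exprMn mulfV // expr1n scale1r //.
have [hu hu'] := mulmx1_unit hm; split => //.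
by rewrite -[invmx _]mulmx1 -hm mulmxA mulVmx // mul1mx.
Qed.

Lemma g_unit a : a != 0 -> c a \in unitmx.
Proof. by move=> ha; case: (g_inv ha). Qed.

Lemma E_c a r : a != 0 -> (r < D)%N -> E r *m c a = ((a ^+ e)^-1 * a ^+ r) *: E r.
Proof.
case: hg => _ _ hc ha hr; by rewrite hc // -scalemxAr gE_mulr // scalerA.
Qed.

Lemma c_E a r : a != 0 -> (r < D)%N -> c a *m E r = ((a ^+ e)^-1 * a ^+ r) *: E r.
Proof.
case: hg => _ _ hc ha hr; by rewrite hc // -scalemxAl gE_mull // scalerA.
Qed.

Lemma E_cinv a r : a != 0 -> (r < D)%N -> E r *m invmx (c a) = (a ^+ e * a^-1 ^+ r) *: E r.
Proof.
move=> ha hr; case: (g_inv ha) => _ ->; by rewrite -scalemxAr gE_mulr // scalerA.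
Qed.

Lemma cinv_E a r : a != 0 -> (r < D)%N -> invmx (c a) *m E r = (a ^+ e * a^-1 ^+ r) *: E r.
Proof.
move=> ha hr; case: (g_inv ha) => _ ->; by rewrite -scalemxAl gE_mull // scalerA.
Qed.

Lemma conjE a r s X : a != 0 -> (r < D)%N -> (s < D)%N ->
  E r *m (c a *m X *m invmx (c a)) *m E s = (a ^+ r * a^-1 ^+ s) *: (E r *m X *m E s).
Proof.
move=> ha hr hs; rewrite !mulmxA E_c // -!mulmxA cinv_E // -scalemxAl -!scalemxAr.
rewrite scalerA !mulmxA; congr (_ *: _).
by rewrite -mulrA mulrCA mulKf ?expf_neq0.
Qed.

Lemma Edecomp X : X = \sum_(r < D) \sum_(s < D) E r *m X *m E s.
Proof.
case: hg => _ h1 _.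
have {1}-> : X = (\sum_(r < D) E r) *m X *m (\sum_(s < D) E s) by rewrite h1 mul1mx mulmx1.
rewrite mulmx_suml mulmx_suml; apply: eq_bigr => r _.
by rewrite mulmx_sumr.
Qed.

Lemma lim_char g Q : limQ c g Q ->
  (forall r s, (r < s)%N -> (s < D)%N -> E r *m g *m E s = 0) /\
  evalmx Q 0 = \sum_(r < D) E r *m g *m E r.
Proof.
move=> hl.
have key : forall r s i j, (r < D)%N -> (s < D)%N ->
    'X^D * (cmx (E r) *m Q *m cmx (E s)) i j = 'X^(r + D - s) * ((E r *m g *m E s) i j)%:P.
  move=> r s i j hr hs; apply/eqP; rewrite -subr_eq0; apply/eqP.
  apply: poly_vanish => a ha.
  rewrite hornerD hornerN !hornerM !hornerXn hornerC.
  have -> : ((cmx (E r) *m Q *m cmx (E s)) i j).[a] =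
      (evalmx (cmx (E r) *m Q *m cmx (E s)) a) i j by rewrite evalmx_entry.
  rewrite !evalmxM !evalmx_cmx -hl // conjE // mxE.
  rewrite -addnBA ?(ltnW hs) // exprD exprB ?unitfE // ?(ltnW hs) // exprVn.
  by rewrite !mulrA [a ^+ D * _]mulrC subrr.
have hz : forall r s, (r < D)%N -> (s < D)%N ->
    E r *m evalmx Q 0 *m E s = if r == s then E r *m g *m E r else 0.
  move=> r s hr hs; apply/matrixP => i j.
  have := congr1 (fun p : {poly k} => p`_D) (key r s i j hr hs).
  rewrite /= !coefXnM ltnn subnn -horner_coef0.
  have -> : ((cmx (E r) *m Q *m cmx (E s)) i j).[0] =
      (evalmx (cmx (E r) *m Q *m cmx (E s)) 0) i j by rewrite evalmx_entry.
  rewrite evalmxM evalmxM !evalmx_cmx => ->.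
  case: (ltngtP r s) => hrs.
  - have h1 : (D < r + D - s)%N = false by lia.
    have h2 : (D - (r + D - s) == 0)%N = false by lia.
    by rewrite h1 coefC h2 mxE.
  - have h1 : (D < r + D - s)%N = true by lia.
    by rewrite h1 mxE.
  - have h1 : (D < r + D - s)%N = false by lia.
    have h2 : (D - (r + D - s) == 0)%N = true by lia.
    by rewrite h1 coefC h2 hrs.
split.
  move=> r s hrs hs; have hr := ltn_trans hrs hs.
  apply/matrixP => i j; have := congr1 (fun p : {poly k} => p`_(r + D - s)) (key r s i j hr hs).
  have h1 : (r + D - s < D)%N = true by lia.
  by rewrite /= !coefXnM ltnn subnn coefC eqxx h1 => <-; rewrite mxE.
rewrite [LHS](Edecomp); apply: eq_bigr => r _.
rewrite (bigD1 r) //= hz // eqxx big1 ?addr0 //.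
move=> s hs; rewrite hz //; case: eqP => // h; case/negP: hs; apply/eqP/val_inj; by rewrite /= h.
Qed.

End Grad.
Section Grad2.
Variables (k : closedFieldType) (N : nat).
Implicit Types (A B g X : 'M[k]_N) (Q : 'M[{poly k}]_N).
Variables (e D : nat) (E : nat -> 'M[k]_N) (c : k -> 'M[k]_N).
Hypothesis hg : grading e D E c.

Lemma evalmx0 (a : k) : evalmx (0 : 'M[{poly k}]_N) a = 0.
Proof. by apply/matrixP => i j; rewrite !mxE horner0. Qed.

Definition tri g := forall r s, (r < s)%N -> (s < D)%N -> E r *m g *m E s = 0.
Definition offd g := forall r s, (r < D)%N -> (s < D)%N -> r != s -> E r *m g *m E s = 0.

Lemma tri_limQ g : tri g -> exists Q, limQ c g Q /\ evalmx Q 0 = \sum_(r < D) E r *m g *m E r.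
Proof.
move=> ht.
exists (\sum_(r < D) \sum_(s < D)
   (if (s <= r)%N then 'X^(r - s) *: cmx (E r *m g *m E s) else 0)); split.
  move=> a ha; rewrite (Edecomp hg (c a *m g *m invmx (c a))) evalmx_sum.
  apply: eq_bigr => r _; rewrite evalmx_sum; apply: eq_bigr => s _.
  rewrite (conjE hg) //; case: leqP => hsr.
    rewrite evalmxZ evalmx_cmx hornerXn exprB ?unitfE // exprVn //.
  by rewrite ht // scaler0 evalmx0.
rewrite evalmx_sum; apply: eq_bigr => r _; rewrite evalmx_sum.
rewrite (bigD1 r) //= leqnn evalmxZ evalmx_cmx hornerXn subnn expr0 scale1r big1 ?addr0 //.
move=> s hs; case: leqP => hsr; last by rewrite evalmx0.
rewrite evalmxZ hornerXn expr0n.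
have -> : (r - s == 0)%N = false.
  apply/negbTE; rewrite subn_eq0 -ltnNge ltn_neqAle hsr andbT.
  by apply: contra hs => /eqP h; apply/eqP/val_inj; rewrite /= h.
by rewrite scale0r.
Qed.

Lemma PlE_g g : Pl c g <-> g \in unitmx /\ tri g.
Proof.
rewrite (PlE _ (g_unit hg)); split.
  by case=> hu [Q hQ]; split => //; case: (lim_char hg hQ).
by case=> hu ht; split => //; case: (tri_limQ ht) => Q [hQ _]; exists Q.
Qed.

Lemma offd_tri g : offd g -> tri g.
Proof.
move=> h r s hrs hs; apply: h => //; [exact: ltn_trans hrs hs | by rewrite ltn_eqF].
Qed.

Lemma offd_eq g : offd g -> g = \sum_(r < D) E r *m g *m E r.
Proof.
move=> h; rewrite [LHS](Edecomp hg); apply: eq_bigr => r _.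
rewrite (bigD1 r) //= big1 ?addr0 // => s hs; apply: h => //.
by apply: contra hs => /eqP h'; apply/eqP/val_inj; rewrite /= h'.
Qed.

Lemma LlE_g g : Ll c g <-> g \in unitmx /\ offd g.
Proof.
rewrite (LlE _ (g_unit hg)); split.
  case=> hu [Q [hQ h0]]; split => //; case: (lim_char hg hQ) => _.
  rewrite h0 => hs r s hr hs' hrs; rewrite hs mulmx_sumr mulmx_suml big1 // => t _.
  case: hg => hE _ _.
  rewrite !mulmxA hE // -!mulmxA hE //.
  case: eqP => [<-|]; last by rewrite !mul0mx.
  by rewrite (negbTE hrs) !mulmx0.
case=> hu ho; split => //; case: (tri_limQ (offd_tri ho)) => Q [hQ h0]; exists Q.
by split => //; rewrite h0 -offd_eq.
Qed.

End Grad2.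
Section Group.
Variables (k : closedFieldType) (N : nat).
Implicit Types (A B g h X Y u : 'M[k]_N) (Q : 'M[{poly k}]_N).

Lemma invmx_eq A B : A *m B = 1%:M -> invmx A = B.
Proof.
move=> hm; have [hu hu'] := mulmx1_unit hm.
by rewrite -[invmx _]mulmx1 -hm mulmxA mulVmx // mul1mx.
Qed.

Lemma invmx_mul A B : A \in unitmx -> B \in unitmx -> invmx (A *m B) = invmx B *m invmx A.
Proof.
move=> hA hB; apply: invmx_eq.
by rewrite mulmxA -(mulmxA A) mulmxV // mulmx1 mulmxV.
Qed.

Lemma conj_mul (c : k -> 'M[k]_N) a g h : c a \in unitmx ->
  c a *m (g *m h) *m invmx (c a) = (c a *m g *m invmx (c a)) *m (c a *m h *m invmx (c a)).
Proof.
move=> hu; by rewrite !mulmxA mulmxKV.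
Qed.

Lemma Pl_mul (c : k -> 'M[k]_N) g h : (forall a, a != 0 -> c a \in unitmx) ->
  Pl c g -> Pl c h -> Pl c (g *m h).
Proof.
move=> hu /(PlE _ hu) [hg [Q1 h1]] /(PlE _ hu) [hh [Q2 h2]].
apply/(PlE _ hu); split; first by rewrite unitmx_mul hg hh.
exists (Q1 *m Q2) => a ha; by rewrite conj_mul ?hu // h1 // h2 // evalmxM.
Qed.

Lemma Pl_inv (c : k -> 'M[k]_N) g : (forall a, a != 0 -> c a \in unitmx) ->
  Pl c g -> Pl c (invmx g).
Proof.
move=> hu /(PlE _ hu) [hg [Q hQ]].
apply/(PlE _ hu); split; first by rewrite unitmx_inv.
exists (((\det g)^-1)%:P *: \adj Q) => a ha.
have hdet : \det (evalmx Q a) = \det g.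
  by rewrite -hQ // !det_mulmx det_inv mulrC mulrA mulVf ?mul1r //; have := hu a ha; rewrite unitmxE unitfE.
have hQu : evalmx Q a \in unitmx by rewrite unitmxE hdet -unitmxE.
have -> : c a *m invmx g *m invmx (c a) = invmx (evalmx Q a).
  have hca := hu a ha.
  have h1 : c a *m g \in unitmx by rewrite unitmx_mul hca hg.
  have h2 : invmx (c a) \in unitmx by rewrite unitmx_inv.
  rewrite -hQ // (invmx_mul h1 h2) (invmx_mul hca hg).
  by rewrite invmxK mulmxA.
by rewrite evalmxZ hornerC /invmx hQu hdet !evalmxE map_mx_adj.
Qed.

Lemma Pl_conj (c : k -> 'M[k]_N) g u : (forall a, a != 0 -> c a \in unitmx) ->
  Pl c u -> Pl c g -> Pl c (invmx u *m g *m u).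
Proof.
move=> hu hPu hPg; apply: Pl_mul => //; apply: Pl_mul => //; exact: Pl_inv.
Qed.

Lemma grading_cochar e D (E : nat -> 'M[k]_N) c : grading e D E c -> cocharacter c.
Proof.
move=> hg; split.
- exists e, (\sum_(d < D) 'X^d *: cmx (E d)) => a ha.
  case: hg => _ _ ->//; congr (_ *: _); rewrite evalmx_sum; apply: eq_bigr => d _.
  by rewrite evalmxZ hornerXn evalmx_cmx.
- exact: g_unit hg.
- move=> a b ha hb; case: (hg) => hE h1 hc.
  rewrite !hc ?mulf_neq0 // -scalemxAl -scalemxAr scalerA exprMn invfM.
  congr (_ *: _); rewrite mulmx_suml; apply: eq_bigr => d _.
  by rewrite -scalemxAl (gE_mulr hg) // scalerA exprMn.
Qed.

Lemma coef_comm e D (E : nat -> 'M[k]_N) c B : grading e D E c ->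
  (forall a, a != 0 -> B *m c a = c a *m B) -> forall d, (d < D)%N -> B *m E d = E d *m B.
Proof.
move=> hg hB d hd; apply/eqP; rewrite -subr_eq0; apply/eqP.
apply: (@mx_vanish _ _ D (fun d => B *m E d - E d *m B) _ d hd) => a ha.
have := hB a ha; case: hg => _ _ -> //; rewrite -scalemxAl -scalemxAr.
move/(congr1 (fun M => a ^+ e *: M)); rewrite !scalerA mulfV ?expf_neq0 // !scale1r.
move/eqP; rewrite -subr_eq0 => /eqP h; rewrite -[RHS]h mulmx_sumr mulmx_suml -sumrB.
by apply: eq_bigr => i _; rewrite scalerBr scalemxAr scalemxAl.
Qed.

End Group.
Section Conj.
Variables (k : closedFieldType) (N : nat).
Implicit Types (A B g h X Y u : 'M[k]_N) (Q : 'M[{poly k}]_N).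

Lemma tri_mul e' D' (F : nat -> 'M[k]_N) mu X Y : grading e' D' F mu ->
  tri D' F X -> tri D' F Y -> tri D' F (X *m Y).
Proof.
move=> hF hX hY r s hrs hs; case: (hF) => hFF h1 _.
have -> : X *m Y = \sum_(t < D') X *m F t *m F t *m Y.
  rewrite -{1}[Y]mul1mx -h1 mulmx_suml mulmx_sumr; apply: eq_bigr => t _.
  by rewrite -(mulmxA X (F t)) hFF // eqxx mulmxA.
rewrite mulmx_sumr mulmx_suml big1 // => t _.
case: (leqP (t : nat) r) => htr.
  rewrite -!mulmxA (mulmxA (F t) Y) hY ?mulmx0 //; exact: leq_ltn_trans htr hrs.
by rewrite !mulmxA hX // !mul0mx.
Qed.

Variables (e D : nat) (E : nat -> 'M[k]_N) (lam : k -> 'M[k]_N).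
Variables (e' D' : nat) (F : nat -> 'M[k]_N) (mu : k -> 'M[k]_N).
Hypotheses (hE : grading e D E lam) (hF : grading e' D' F mu)
  (hP : forall a, a != 0 -> Pl mu (lam a)).

Definition pi X := \sum_(q < D') F q *m X *m F q.

Lemma Etri d : (d < D)%N -> tri D' F (E d).
Proof.
move=> hd r s hrs hs.
apply: (@mx_vanish _ _ D (fun d => F r *m E d *m F s) _ d hd) => a ha.
have := hP ha; move/(PlE_g hF) => [_ /(_ r s hrs hs)].
case: (hE) => _ _ -> //; rewrite -scalemxAr -scalemxAl.
move/(congr1 (fun M => a ^+ e *: M)); rewrite scalerA mulfV ?expf_neq0 // scale1r scaler0 => h.
rewrite -[RHS]h mulmx_sumr mulmx_suml; apply: eq_bigr => i _.
by rewrite -scalemxAr -scalemxAl.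
Qed.

Lemma FF r s : (r < D')%N -> (s < D')%N -> F r *m F s = if r == s then F r else 0.
Proof. by case: hF => h _ _; apply: h. Qed.

Lemma pi_tri X : tri D' F (pi X).
Proof.
move=> r s hrs hs; rewrite /pi mulmx_sumr mulmx_suml big1 // => q _.
rewrite !mulmxA FF ?(ltn_trans hrs hs) //; case: eqP => [<-|]; last by rewrite !mul0mx.
by rewrite -!mulmxA (FF (ltn_trans hrs hs) hs) (ltn_eqF hrs) !mulmx0.
Qed.

Lemma F_pi X q : (q < D')%N -> F q *m pi X = F q *m X *m F q.
Proof.
move=> hq; rewrite /pi mulmx_sumr (bigD1 (Ordinal hq)) //= big1 ?addr0.
  by rewrite !mulmxA (FF hq hq) eqxx.
move=> t ht; rewrite !mulmxA FF //; case: eqP => [h|]; last by rewrite !mul0mx.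
by case/negP: ht; apply/eqP/val_inj; rewrite /= h.
Qed.

Lemma pi_F X q : (q < D')%N -> pi X *m F q = F q *m X *m F q.
Proof.
move=> hq; rewrite /pi mulmx_suml (bigD1 (Ordinal hq)) //= big1 ?addr0.
  by rewrite -!mulmxA FF // eqxx.
move=> t ht; rewrite -!mulmxA FF //; case: eqP => [h|]; last by rewrite !mulmx0.
by case/negP: ht; apply/eqP/val_inj; rewrite /= h.
Qed.

Lemma pi_comm X q : (q < D')%N -> F q *m pi X = pi X *m F q.
Proof. by move=> hq; rewrite F_pi // pi_F. Qed.

Lemma pi_mul X Y : tri D' F X -> tri D' F Y -> pi (X *m Y) = pi X *m pi Y.
Proof.
move=> hX hY.
transitivity (\sum_(q < D') pi X *m (F q *m Y *m F q)); last by rewrite -mulmx_sumr.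
rewrite {1}/pi; apply: eq_bigr => q _.
rewrite (mulmxA (pi X)) (mulmxA (pi X)) (pi_F _ (ltn_ord q)).
case: (hF) => _ h1 _.
have -> : F q *m (X *m Y) = \sum_(t < D') F q *m X *m F t *m Y.
  rewrite -{1}[Y]mul1mx -h1 mulmx_suml mulmx_sumr mulmx_sumr; apply: eq_bigr => t _.
  by rewrite !mulmxA.
rewrite mulmx_suml (bigD1 q) //= big1 ?addr0.
  by [].
move=> t ht; have htq : (t : nat) != q by apply: contra ht => /eqP h; apply/eqP/val_inj.
case: (ltngtP (t : nat) q) => h.
- by rewrite -!mulmxA (mulmxA (F t)) hY // !mulmx0.
- by rewrite hX // !mul0mx.
- by rewrite h eqxx in htq.
Qed.

Lemma pi_add X Y : pi (X + Y) = pi X + pi Y.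
Proof. by rewrite /pi -big_split; apply: eq_bigr => q _; rewrite mulmxDr mulmxDl. Qed.

Lemma pi_scale (a : k) X : pi (a *: X) = a *: pi X.
Proof.
rewrite /pi scaler_sumr; apply: eq_bigr => q _; by rewrite -scalemxAr -scalemxAl.
Qed.

Lemma pi_sum (f : nat -> 'M[k]_N) : pi (\sum_(d < D) f d) = \sum_(d < D) pi (f d).
Proof.
rewrite /pi exchange_big; apply: eq_bigr => q _.
by rewrite mulmx_sumr mulmx_suml.
Qed.

Lemma pi0 : pi 0 = 0.
Proof. by rewrite /pi big1 // => q _; rewrite mulmx0 mul0mx. Qed.

Lemma pi1 : pi 1%:M = 1%:M.
Proof.
case: (hF) => _ h1 _; rewrite /pi -[RHS]h1; apply: eq_bigr => q _.
by rewrite mulmx1 FF // eqxx.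
Qed.

Lemma pi_pi X : pi (pi X) = pi X.
Proof.
rewrite {1}/pi [RHS]/pi; apply: eq_bigr => q _.
by rewrite (F_pi _ (ltn_ord q)) -mulmxA (FF (ltn_ord q) (ltn_ord q)) eqxx.
Qed.

Definition E' d := pi (E d).
Definition nu a := pi (lam a).

Lemma nu_grading : grading e D E' nu.
Proof.
case: (hE) => hEE h1 hc; split.
- move=> d d' hd hd'; rewrite /E' -(pi_mul (Etri hd) (Etri hd')) (hEE d d' hd hd').
  by case: ifP; rewrite ?pi0.
- by rewrite /E' -(pi_sum E) h1 pi1.
- move=> a ha; rewrite /nu hc // pi_scale (pi_sum (fun d => a ^+ d *: E d)); congr (_ *: _).
  by apply: eq_bigr => d _; rewrite pi_scale.
Qed.

Definition uu := \sum_(d < D) E' d *m E d.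

Lemma uu_E d : (d < D)%N -> uu *m E d = E' d *m uu.
Proof.
move=> hd; case: (hE) => hEE _ _; case: nu_grading => hEE' _ _.
rewrite /uu mulmx_suml mulmx_sumr (bigD1 (Ordinal hd)) //= big1 ?addr0.
  rewrite (bigD1 (Ordinal hd)) //= big1 ?addr0.
    by rewrite -mulmxA hEE // eqxx mulmxA hEE' // eqxx.
  move=> t ht; rewrite mulmxA hEE' //; case: eqP => [h|]; last by rewrite mul0mx.
  by case/negP: ht; apply/eqP/val_inj; rewrite /= h.
move=> t ht; rewrite -mulmxA hEE //; case: eqP => [h|]; last by rewrite mulmx0.
by case/negP: ht; apply/eqP/val_inj; rewrite /= h.
Qed.

Lemma uu_lam a : a != 0 -> uu *m lam a = nu a *m uu.
Proof.
move=> ha; case: (hE) => _ _ hc; case: nu_grading => _ _ hc'.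
rewrite hc // hc' // -scalemxAr -scalemxAl; congr (_ *: _).
rewrite mulmx_sumr mulmx_suml; apply: eq_bigr => d _.
by rewrite -scalemxAr -scalemxAl uu_E.
Qed.

Lemma uu_tri : tri D' F uu.
Proof.
move=> r s hrs hs; rewrite /uu mulmx_sumr mulmx_suml big1 // => d _.
have := tri_mul hF (pi_tri (E d)) (Etri (ltn_ord d)); by move/(_ r s hrs hs).
Qed.

Lemma pi_uu : pi uu = 1%:M.
Proof.
case: nu_grading => hEE' h1 _.
rewrite /uu (pi_sum (fun d => E' d *m E d)) -h1; apply: eq_bigr => d _.
by rewrite (pi_mul (pi_tri _) (Etri (ltn_ord d))) /E' pi_pi -/(E' d) (hEE' d d (ltn_ord d) (ltn_ord d)) eqxx.
Qed.

Lemma uu_unit : uu \in unitmx.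
Proof.
have [Q [hQ h0]] := tri_limQ hF uu_tri.
have := limQ_det (g_unit hF) hQ; rewrite h0 -/(pi uu) pi_uu det1 => h.
by rewrite unitmxE -h unitr1.
Qed.

Lemma Pl_mu_uu : Pl mu uu.
Proof. by apply/(PlE_g hF); split; [exact: uu_unit | exact: uu_tri]. Qed.

Lemma nu_conj a : a != 0 -> nu a = uu *m lam a *m invmx uu.
Proof. by move=> ha; rewrite uu_lam // mulmxK // uu_unit. Qed.

Lemma E'_conj d : (d < D)%N -> E' d = uu *m E d *m invmx uu.
Proof. by move=> hd; rewrite uu_E // mulmxK // uu_unit. Qed.

Lemma Pl_nu g : Pl nu g <-> Pl lam (invmx uu *m g *m uu).
Proof.
have hu := uu_unit.
rewrite (PlE_g nu_grading) (PlE_g hE); split; case=> hg ht; split.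
- by rewrite !unitmx_mul unitmx_inv hu hg.
- move=> r s hrs hs; have := ht r s hrs hs; rewrite !E'_conj ?(ltn_trans hrs hs) //.
  move=> h; have := congr1 (fun M => invmx uu *m M *m uu) h.
  by rewrite mulmx0 mul0mx !mulmxA mulVmx // mul1mx -!mulmxA mulVmx // mulmx1 !mulmxA.
- by move: hg; rewrite !unitmx_mul unitmx_inv hu andbT.
- move=> r s hrs hs; rewrite !E'_conj ?(ltn_trans hrs hs) //.
  have := ht r s hrs hs; rewrite !mulmxA => h.
  have -> : uu *m E r *m invmx uu *m g *m uu *m E s *m invmx uu =
    uu *m (E r *m invmx uu *m g *m uu *m E s) *m invmx uu by rewrite !mulmxA.
  by rewrite h mulmx0 mul0mx.
Qed.

Lemma nu_mu_comm a b : b != 0 -> nu a *m mu b = mu b *m nu a.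
Proof.
move=> hb; case: (hF) => _ _ hc; rewrite hc // -scalemxAr -scalemxAl; congr (_ *: _).
rewrite mulmx_sumr mulmx_suml; apply: eq_bigr => q _.
by rewrite -scalemxAr -scalemxAl pi_comm.
Qed.

Lemma comm_pi B X : (forall q, (q < D')%N -> B *m F q = F q *m B) -> B *m X = X *m B ->
  B *m pi X = pi X *m B.
Proof.
move=> hB hX; rewrite /pi mulmx_sumr mulmx_suml; apply: eq_bigr => q _.
have hq := hB q (ltn_ord q).
by rewrite !mulmxA hq -(mulmxA (F q) B X) hX mulmxA -(mulmxA (F q *m X) B (F q)) hq !mulmxA.
Qed.

Lemma comm_uu B : (forall a, a != 0 -> B *m lam a = lam a *m B) ->
  (forall b, b != 0 -> B *m mu b = mu b *m B) -> B *m uu = uu *m B.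
Proof.
move=> hl hm; have hBE := coef_comm hE hl; have hBF := coef_comm hF hm.
rewrite /uu mulmx_sumr mulmx_suml; apply: eq_bigr => d _.
by rewrite mulmxA comm_pi ?hBE // -!mulmxA hBE.
Qed.

End Conj.
Section Test.
Variables (k : closedFieldType) (N : nat).
Implicit Types (A B g h X Y Z u : 'M[k]_N).

Lemma exists_Z X Y : X != 0 -> Y != 0 -> exists Z, X *m Z *m Y != 0.
Proof.
move=> hX hY.
have hex : forall W : 'M[k]_N, W != 0 -> exists ir : 'I_N * 'I_N, W ir.1 ir.2 != 0.
  move=> W hW; apply/existsP; apply: contraNT hW => /existsPn h.
  apply/eqP/matrixP => i j; rewrite mxE; apply/eqP; have := h (i, j); by rewrite negbK.
have [[i r] /= hir] := hex X hX; have [[c j] /= hcj] := hex Y hY.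
exists (delta_mx r c).
have e1 : forall t, (X *m delta_mx r c) i t = X i r * (t == c)%:R.
  move=> t; rewrite !mxE (bigD1 r) //= big1 ?addr0; first by rewrite !mxE eqxx.
  by move=> u hu; rewrite !mxE (negbTE hu) mulr0.
apply/eqP => /matrixP /(_ i j); rewrite !mxE (bigD1 c) //= big1 ?addr0.
  by rewrite e1 eqxx mulr1 => /eqP; rewrite mulf_eq0 (negbTE hir) (negbTE hcj).
by move=> t ht; rewrite e1 (negbTE ht) mulr0 mul0r.
Qed.

Variables (e1 D1 : nat) (E : nat -> 'M[k]_N) (nu : k -> 'M[k]_N).
Variables (e2 D2 : nat) (F : nat -> 'M[k]_N) (mu : k -> 'M[k]_N).
Hypotheses (hE : grading e1 D1 E nu) (hF : grading e2 D2 F mu)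
  (hcomm : forall p q, (p < D1)%N -> (q < D2)%N -> E p *m F q = F q *m E p)
  (hPP : forall g, Pl mu g -> Pl nu g).

Lemma incompat p p' q : (p < p')%N -> (p' < D1)%N -> (q < D2)%N ->
  E p *m F q != 0 -> F q *m E p' != 0 -> False.
Proof.
move=> hpp hp' hq hX hY; have hp := ltn_trans hpp hp'.
case: (hE) => hEE _ _; case: (hF) => hFF _ _.
have [Z hZ] := exists_Z hX hY.
set x := E p *m F q *m Z *m (F q *m E p') in hZ.
have hxx : x *m x = 0.
  rewrite /x !mulmxA -(mulmxA _ (E p') (E p)) hEE // (gtn_eqF hpp) mulmx0 !mul0mx.
  done.
have hu : (1%:M + x) \in unitmx.
  have : (1%:M + x) *m (1%:M - x) = 1%:M.
    by rewrite mulmxDl mul1mx mulmxBr mulmx1 hxx subr0 subrK.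
  by case/mulmx1_unit.
have hPmu : Pl mu (1%:M + x).
  apply/(PlE_g hF); split => // r s hrs hs; have hr := ltn_trans hrs hs.
  rewrite mulmxDr mulmxDl mulmx1 hFF // (ltn_eqF hrs) add0r /x.
  case: (eqVneq r q) => [erq|nrq].
    rewrite -!mulmxA (hcomm hp' hs) -erq !mulmxA -(mulmxA _ (F r) (F s)) hFF // (ltn_eqF hrs).
    by rewrite mulmx0 !mul0mx.
  rewrite !mulmxA -(hcomm hp hr) -(mulmxA (E p) (F r) (F q)) hFF // (negbTE nrq).
  by rewrite mulmx0 !mul0mx.
have := hPP hPmu; move/(PlE_g hE) => [_ /(_ p p' hpp hp')].
rewrite mulmxDr mulmxDl mulmx1 hEE // (ltn_eqF hpp) add0r /x.
have -> : E p *m (E p *m F q *m Z *m (F q *m E p')) *m E p' = E p *m F q *m Z *m (F q *m E p').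
  rewrite !mulmxA hEE // eqxx -!mulmxA hEE // eqxx; done.
by move=> h; move: hZ; rewrite /x h eqxx.
Qed.

Lemma test_Ll h : Ll mu h -> Ll nu h.
Proof.
move/(LlE_g hF) => [hu ho]; apply/(LlE_g hE); split => // p p' hp hp' hpp.
case: (hF) => hFF _ _.
rewrite (offd_eq hF ho) mulmx_sumr mulmx_suml big1 // => q _.
have hq := ltn_ord q.
have -> : E p *m (F q *m h *m F q) *m E p' = (E p *m F q) *m h *m (F q *m E p').
  by rewrite !mulmxA.
case: (eqVneq (E p *m F q) 0) => [->|hX]; first by rewrite !mul0mx.
case: (eqVneq (F q *m E p') 0) => [->|hY]; first by rewrite mulmx0.
exfalso; case: (ltngtP p p') => h'.
- exact: incompat h' hp' hq hX hY.
- apply: (incompat h' hp hq); first by rewrite (hcomm hp' hq) .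
  by rewrite -(hcomm hp hq).
- by rewrite h' eqxx in hpp.
Qed.

End Test.
Section Closed.
Variables (k : closedFieldType) (N : nat).

Lemma zclosed_lim (K : mxset k N) (Q : 'M[{poly k}]_N) : zclosed K ->
  (forall b, b != 0 -> K (evalmx Q b)) -> evalmx Q 0 \in unitmx -> K (evalmx Q 0).
Proof.
case=> S hS hb hu; apply/hS; split => // p hp.
pose h := fun i : 'I_(N * N) => mxvec Q 0 i.
pose q : {poly k} := mmap (@polyC k) h p.
have hq : forall b, q.[b] = p.@[mxcoords (evalmx Q b)].
  move=> b; rewrite /q /mmap /mmap1 mevalE horner_sum; apply: eq_bigr => m _.
  rewrite hornerM hornerC horner_prod; congr (_ * _); apply: eq_bigr => i _.
  by rewrite horner_exp /mxcoords /h evalmxE -map_mxvec mxE.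
have q0 : q = 0.
  apply: poly_vanish => b hb0; rewrite hq.
  by have /hS [_ ->] := hb b hb0.
by rewrite -hq q0 horner0.
Qed.

End Closed.
Section Misc.
Variables (k : closedFieldType) (N : nat).

Lemma grading_comm e1 D1 (E : nat -> 'M[k]_N) (c : k -> 'M[k]_N) e2 D2 (F : nat -> 'M[k]_N) (c' : k -> 'M[k]_N) :
  grading e1 D1 E c -> grading e2 D2 F c' ->
  (forall a b, a != 0 -> b != 0 -> c a *m c' b = c' b *m c a) ->
  forall p q, (p < D1)%N -> (q < D2)%N -> E p *m F q = F q *m E p.
Proof.
move=> hE hF hcc p q hp hq.
have h1 : forall b, b != 0 -> E p *m c' b = c' b *m E p.
  move=> b hb; apply/esym; apply: (coef_comm hE) => // a ha; apply/esym; exact: hcc.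
by apply: (coef_comm hF) => // b hb; apply: h1.
Qed.

Lemma conj_mulmx (u A C : 'M[k]_N) : u \in unitmx ->
  (u *m A *m invmx u) *m (u *m C *m invmx u) = u *m (A *m C) *m invmx u.
Proof. by move=> hu; rewrite !mulmxA mulmxKV. Qed.

Lemma Pl_conj_gen (c : k -> 'M[k]_N) u X : (forall a, a != 0 -> c a \in unitmx) -> u \in unitmx ->
  Pl c X -> Pl (fun a => u *m c a *m invmx u) (u *m X *m invmx u).
Proof.
move=> hc hu hP.
have hu' : forall a, a != 0 -> u *m c a *m invmx u \in unitmx.
  by move=> a ha; rewrite !unitmx_mul unitmx_inv hu hc.
case/(PlE _ hc): hP => hX [Q hQ]; apply/(PlE _ hu'); split.
  by rewrite !unitmx_mul unitmx_inv hu hX.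
exists (cmx u *m Q *m cmx (invmx u)) => a ha /=.
have -> : invmx (u *m c a *m invmx u) = u *m invmx (c a) *m invmx u.
  apply: invmx_eq; rewrite conj_mulmx // mulmxV ?hc // mulmx1 mulmxV //.
by rewrite !conj_mulmx // hQ // !evalmxM !evalmx_cmx.
Qed.

End Misc.

Section Blocks.
Variables (k : closedFieldType) (N n : nat) (Vs : 'I_n -> 'M[k]_N).
Hypotheses (hdir : mxdirect (\sum_(i < n) Vs i)) (hfull : row_full (\sum_(i < n) Vs i)%MS).
Implicit Types (A B g h X Y Z u : 'M[k]_N).

Definition Bp i := locked (proj_mx (Vs i) (\sum_(j | j != i) Vs j)%MS).

Lemma hcap i : (Vs i :&: \sum_(j | j != i) Vs j = 0)%MS.
Proof. by have := (mxdirect_sumsP hdir) i isT. Qed.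

Lemma B_sub i : (Bp i <= Vs i)%MS.
Proof. by rewrite -[Bp i]mul1mx /Bp -lock proj_mx_sub. Qed.

Lemma Bact i j (X : 'M[k]_N) : (X <= Vs i)%MS -> X *m Bp j = if i == j then X else 0.
Proof.
move=> hX; rewrite /Bp -lock; case: eqVneq => [<-|hij]; first by rewrite proj_mx_id // hcap.
rewrite proj_mx_0 // ?hcap //; apply: (submx_trans hX).
by apply: (sumsmx_sup i) => //; rewrite eq_sym.
Qed.

Lemma B_sum : \sum_(i < n) Bp i = 1%:M.
Proof.
have : (1%:M <= \sum_(i < n) Vs i)%MS by rewrite sub1mx.
case/sub_sumsmxP => u hu.
rewrite -[LHS]mul1mx {1}hu mulmx_suml; rewrite [RHS]hu; apply: eq_bigr => i _.
have hV : forall j, Vs i *m Bp j = if i == j then Vs i else 0.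
  by move=> j; apply: Bact.
rewrite -mulmxA mulmx_sumr (bigD1 i) //= hV eqxx big1 ?addr0 //.
by move=> j hj; rewrite hV eq_sym (negbTE hj).
Qed.

Lemma BB i j : Bp i *m Bp j = if i == j then Bp i else 0.
Proof. by apply: Bact; apply: B_sub. Qed.

Lemma blk_comm g : (forall j, (Vs j *m g <= Vs j)%MS) -> forall j, Bp j *m g = g *m Bp j.
Proof.
move=> hg j.
have hs : forall i, (Bp i *m g <= Vs i)%MS.
  by move=> i; apply: submx_trans (hg i); apply: submxMr; apply: B_sub.
have hB : forall i, Bp i *m g *m Bp j = if i == j then Bp i *m g else 0.
  by move=> i; apply: Bact.
rewrite -[g in RHS]mul1mx -B_sum !mulmx_suml (bigD1 j) //= hB eqxx big1 ?addr0 //.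
by move=> i hi; rewrite hB (negbTE hi).
Qed.

Lemma triv_B g j : Vs j *m g = Vs j -> Bp j *m g = Bp j.
Proof. by move=> h; case/submxP: (B_sub j) => D ->; rewrite -mulmxA h. Qed.

Lemma B_triv g j : Bp j *m g = Bp j -> Vs j *m g = Vs j.
Proof.
move=> h; have e : Vs j *m Bp j = Vs j by rewrite (@Bact j j (Vs j) (submx_refl _)) eqxx.
by rewrite -e -mulmxA h.
Qed.

Lemma comm_pres g j : Bp j *m g = g *m Bp j -> (Vs j *m g <= Vs j)%MS.
Proof.
move=> h; have e : Vs j *m Bp j = Vs j by rewrite (@Bact j j (Vs j) (submx_refl _)) eqxx.
have : (Vs j *m g *m Bp j <= Vs j)%MS by apply: submx_trans (submxMl _ _) (B_sub j).
by rewrite -mulmxA -h mulmxA e.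
Qed.

Definition blk i X := Bp i *m X + (1%:M - Bp i).

Lemma Bidem i : Bp i *m Bp i = Bp i.
Proof. by rewrite BB eqxx. Qed.

Lemma B_1B i : Bp i *m (1%:M - Bp i) = 0.
Proof. by rewrite mulmxBr mulmx1 Bidem subrr. Qed.

Lemma B1_B i : (1%:M - Bp i) *m Bp i = 0.
Proof. by rewrite mulmxBl mul1mx Bidem subrr. Qed.

Lemma blk_mul i X Y : Bp i *m X = X *m Bp i -> blk i X *m blk i Y = blk i (X *m Y).
Proof.
move=> hX; rewrite /blk mulmxDl (mulmxDr (Bp i *m X)) (mulmxDr (1%:M - Bp i)).
have t1 : Bp i *m X *m (Bp i *m Y) = Bp i *m (X *m Y).
  by rewrite mulmxA hX -(mulmxA X) Bidem -hX -mulmxA.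
have t2 : Bp i *m X *m (1%:M - Bp i) = 0 by rewrite hX -mulmxA B_1B mulmx0.
have t3 : (1%:M - Bp i) *m (Bp i *m Y) = 0 by rewrite mulmxA B1_B mul0mx.
have t4 : (1%:M - Bp i) *m (1%:M - Bp i) = 1%:M - Bp i by rewrite mulmxBr mulmx1 B1_B subr0.
by rewrite t1 t2 t3 t4 addr0 add0r.
Qed.

Lemma blk1 i : blk i 1%:M = 1%:M.
Proof. by rewrite /blk mulmx1 addrC subrK. Qed.

Lemma prod_seq (f : 'I_n -> 'M[k]_N) j :
  (forall l i, Bp i *m f l = f l *m Bp i) -> (forall l, l != j -> Bp j *m f l = Bp j) ->
  forall s : seq 'I_n, uniq s ->
  Bp j *m \big[mulmx/1%:M]_(l <- s) f l = if j \in s then Bp j *m f j else Bp j.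
Proof.
move=> hc ht; elim=> [|l s IH] /=; first by rewrite big_nil mulmx1.
case/andP => hl hu; rewrite big_cons in_cons.
case: eqVneq => [ejl|hjl] /=; first subst l.
  have e1 := hc j j.
  by rewrite mulmxA e1 -mulmxA IH // (negbTE hl).
have e2 := ht l.
by rewrite mulmxA e2 1?eq_sym // IH.
Qed.

Lemma prod_B (f : 'I_n -> 'M[k]_N) j :
  (forall l i, Bp i *m f l = f l *m Bp i) -> (forall l, l != j -> Bp j *m f l = Bp j) ->
  Bp j *m \big[mulmx/1%:M]_(l < n) f l = Bp j *m f j.
Proof.
move=> hc ht; have := prod_seq hc ht (index_enum_uniq 'I_n).
by rewrite mem_index_enum.
Qed.

Lemma sum_B X : X = \sum_(i < n) Bp i *m X.
Proof. by rewrite -mulmx_suml B_sum mul1mx. Qed.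


Local Notation B := (Bp).
Lemma sum_neq i : \sum_(j | j != i) B j = 1%:M - B i.
Proof. by rewrite -B_sum [in RHS](bigD1 i) //= addrC addrK. Qed.

Lemma blk_id X i : (forall j, j != i -> B j *m X = B j) -> blk i X = X.
Proof.
move=> h; rewrite /blk -sum_neq [RHS](sum_B X) [in RHS](bigD1 i) //=; congr (_ + _).
by apply: eq_bigr => j hj; rewrite h.
Qed.

Lemma comm_inv X i : X \in unitmx -> B i *m X = X *m B i -> B i *m invmx X = invmx X *m B i.
Proof.
move=> hu h.
have : invmx X *m (B i *m X) *m invmx X = invmx X *m (X *m B i) *m invmx X by rewrite h.
rewrite mulmxA -(mulmxA _ X) mulmxV // mulmx1 (mulmxA (invmx X) X) mulVmx // mul1mx.
by move=> ->.
Qed.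

Lemma blk_unit X i : X \in unitmx -> B i *m X = X *m B i ->
  blk i X \in unitmx /\ invmx (blk i X) = blk i (invmx X).
Proof.
move=> hu h.
have e : blk i X *m blk i (invmx X) = 1%:M by rewrite blk_mul // mulmxV // blk1.
by have [h1 _] := mulmx1_unit e; split => //; apply: invmx_eq.
Qed.

Lemma blk_conj X Y g i : B i *m X = X *m B i -> B i *m Y = Y *m B i -> B i *m g = g *m B i ->
  blk i X *m g *m blk i Y = B i *m (X *m g *m Y) + (1%:M - B i) *m g.
Proof.
move=> hX hY hg.
have hI := Bidem i; have h1 := B_1B i; have h2 := B1_B i.
have hgl : forall M : 'M[k]_N, M *m g *m B i = M *m B i *m g.
  by move=> M; rewrite -!mulmxA hg.
have hXl : forall M : 'M[k]_N, M *m X *m B i = M *m B i *m X by move=> M; rewrite -!mulmxA hX.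
have hgC : g *m (1%:M - B i) = (1%:M - B i) *m g.
  by rewrite mulmxBr mulmx1 mulmxBl mul1mx hg.
have hCC : (1%:M - B i) *m (1%:M - B i) = 1%:M - B i by rewrite mulmxBr mulmx1 h2 subr0.
rewrite /blk.
set C := (1%:M - B i).
rewrite (mulmxDl (B i *m X) C g) (mulmxDl (B i *m X *m g) (C *m g)).
rewrite (mulmxDr (B i *m X *m g)) (mulmxDr (C *m g)).
have t1 : B i *m X *m g *m (B i *m Y) = B i *m (X *m g *m Y).
  by rewrite !mulmxA hgl hXl hI.
have t2 : B i *m X *m g *m C = 0.
  by rewrite hX -hgl -(mulmxA (X *m g) (B i) C) h1 mulmx0.
have t3 : C *m g *m (B i *m Y) = 0 by rewrite mulmxA hgl h2 !mul0mx.
have t4 : C *m g *m C = C *m g by rewrite -mulmxA hgC mulmxA hCC.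
by rewrite t1 t2 t3 t4 addr0 add0r.
Qed.


Definition bd (X : 'M[k]_N) := forall j, B j *m X = X *m B j.

Lemma blk_unit' (c : k -> 'M[k]_N) i : (forall a, a != 0 -> c a \in unitmx) -> (forall a, a != 0 -> bd (c a)) ->
  forall a, a != 0 -> blk i (c a) \in unitmx.
Proof. by move=> hu hb a ha; case: (blk_unit (hu a ha) (hb a ha i)). Qed.

Lemma limQ_blk_fwd (c : k -> 'M[k]_N) g Q i : (forall a, a != 0 -> c a \in unitmx) ->
  (forall a, a != 0 -> bd (c a)) -> bd g ->
  limQ c g Q -> limQ (fun a => blk i (c a)) g (cmx (B i) *m Q + cmx ((1%:M - B i) *m g)).
Proof.
move=> hu hb hg hl a ha /=.
have [_ ->] := blk_unit (hu a ha) (hb a ha i).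
rewrite blk_conj ?(hb a ha i) ?hg //; last exact: comm_inv (hu a ha) (hb a ha i).
by rewrite evalmxD evalmxM !evalmx_cmx -hl.
Qed.

Lemma limQ_blk_bwd (c : k -> 'M[k]_N) g (Qs : 'I_n -> 'M[{poly k}]_N) : (forall a, a != 0 -> c a \in unitmx) ->
  (forall a, a != 0 -> bd (c a)) -> bd g ->
  (forall i, limQ (fun a => blk i (c a)) g (Qs i)) -> limQ c g (\sum_i cmx (B i) *m Qs i).
Proof.
move=> hu hb hg hl a ha; rewrite evalmx_sum [LHS](sum_B); apply: eq_bigr => i _.
rewrite evalmxM evalmx_cmx -hl //=; have [_ ->] := blk_unit (hu a ha) (hb a ha i).
rewrite blk_conj ?(hb a ha i) ?hg //; last exact: comm_inv (hu a ha) (hb a ha i).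
by rewrite mulmxDr (mulmxA (B i) (B i)) Bidem (mulmxA (B i) (1%:M - B i)) B_1B mul0mx addr0.
Qed.

Lemma Pl_blk_fwd (c : k -> 'M[k]_N) g i : (forall a, a != 0 -> c a \in unitmx) ->
  (forall a, a != 0 -> bd (c a)) -> bd g -> Pl c g -> Pl (fun a => blk i (c a)) g.
Proof.
move=> hu hb hg /(PlE _ hu) [hg0 [Q hQ]]; apply/(PlE _ (blk_unit' i hu hb)); split => //.
by eexists; apply: limQ_blk_fwd hQ.
Qed.

Lemma Pl_blk_bwd (c : k -> 'M[k]_N) g : (forall a, a != 0 -> c a \in unitmx) ->
  (forall a, a != 0 -> bd (c a)) -> bd g -> g \in unitmx ->
  (forall i, Pl (fun a => blk i (c a)) g) -> Pl c g.
Proof.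
move=> hu hb hg hg0 h.
have : forall i, exists Q, limQ (fun a => blk i (c a)) g Q.
  by move=> i; case/(PlE _ (blk_unit' i hu hb)): (h i) => _ [Q hQ]; exists Q.
case/fin_all_exists => Qs hQs; apply/(PlE _ hu); split => //.
by eexists; apply: limQ_blk_bwd hQs.
Qed.

Lemma Ll_blk_fwd (c : k -> 'M[k]_N) g i : (forall a, a != 0 -> c a \in unitmx) ->
  (forall a, a != 0 -> bd (c a)) -> bd g -> Ll c g -> Ll (fun a => blk i (c a)) g.
Proof.
move=> hu hb hg /(LlE _ hu) [hg0 [Q [hQ h0]]]; apply/(LlE _ (blk_unit' i hu hb)); split => //.
eexists; split; first by apply: limQ_blk_fwd hQ.
by rewrite evalmxD evalmxM !evalmx_cmx h0 -mulmxDl addrC subrK mul1mx.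
Qed.

Lemma Ll_blk_bwd (c : k -> 'M[k]_N) g : (forall a, a != 0 -> c a \in unitmx) ->
  (forall a, a != 0 -> bd (c a)) -> bd g -> g \in unitmx ->
  (forall i, Ll (fun a => blk i (c a)) g) -> Ll c g.
Proof.
move=> hu hb hg hg0 h.
have : forall i, exists Q, limQ (fun a => blk i (c a)) g Q /\ evalmx Q 0 = g.
  by move=> i; case/(LlE _ (blk_unit' i hu hb)): (h i) => _ [Q hQ]; exists Q.
case/fin_all_exists => Qs hQs; apply/(LlE _ hu); split => //.
exists (\sum_i cmx (B i) *m Qs i); split.
  by apply: (limQ_blk_bwd hu hb hg) => i; case: (hQs i).
rewrite evalmx_sum [RHS](sum_B); apply: eq_bigr => i _.
by rewrite evalmxM evalmx_cmx; case: (hQs i) => _ ->.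
Qed.

Lemma blk_cochar (c : k -> 'M[k]_N) i : cocharacter c -> (forall a, a != 0 -> bd (c a)) ->
  cocharacter (fun a => blk i (c a)).
Proof.
move=> hc hb; have hc' := hc; case: hc' => [[e [P hP]] hu hm]; split.
- exists e, (cmx (B i) *m P + 'X^e *: cmx (1%:M - B i)) => a ha.
  rewrite /blk hP // evalmxD evalmxM evalmxZ !evalmx_cmx hornerXn scalerDr scalerA.
  by rewrite mulVf ?expf_neq0 // scale1r scalemxAr.
- exact: blk_unit' i hu hb.
- move=> a b ha hb0 /=; rewrite hm // blk_mul //; exact: hb a ha i.
Qed.

Lemma Ll_self (c : k -> 'M[k]_N) a : cocharacter c -> a != 0 -> Ll c (c a).
Proof.
case=> [_ hu hm] ha; split; first exact: hu.
exists (cmx (c a)); rewrite evalmx_cmx; split => //; last exact: hu.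
move=> b hb; rewrite evalmx_cmx -hm // mulrC hm // -mulmxA mulmxV ?mulmx1 //; exact: hu.
Qed.


Variables (H K : mxset k N) (Ks : 'I_n -> mxset k N).
Hypotheses (hH : subgroup H) (hHV : forall h, H h -> forall i, (Vs i *m h <= Vs i)%MS)
  (hK : reductive K) (hKs : forall i, subgroup (Ks i))
  (hKsV : forall i g, Ks i g -> (Vs i *m g <= Vs i)%MS /\ (forall j, j != i -> Vs j *m g = Vs j))
  (hKdef : forall g, K g <-> exists f : 'I_n -> 'M[k]_N,
       (forall i, Ks i (f i)) /\ g = \big[mulmx/1%:M]_(i < n) f i).

Lemma Ks_bd i g : Ks i g -> bd g.
Proof.
move=> /hKsV [h1 h2]; apply: blk_comm => j; case: (eqVneq j i) => [->//|hj].
by rewrite h2.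
Qed.

Lemma Ks_triv i g j : Ks i g -> j != i -> B j *m g = B j.
Proof. by move=> /hKsV [_ h2] hj; apply: triv_B; apply: h2. Qed.

Lemma Ks_blk i g : Ks i g -> blk i g = g.
Proof. by move=> hg; apply: blk_id => j hj; apply: Ks_triv hg hj. Qed.

Lemma prodK (f : 'I_n -> 'M[k]_N) : (forall l, Ks l (f l)) ->
  forall j, B j *m \big[mulmx/1%:M]_(l < n) f l = B j *m f j.
Proof.
move=> hf j; apply: prod_B.
  by move=> l i; apply: (Ks_bd (hf l)).
by move=> l hl; apply: Ks_triv (hf l) _; rewrite eq_sym.
Qed.

Lemma bd_mul X Y : bd X -> bd Y -> bd (X *m Y).
Proof. by move=> hX hY j; rewrite mulmxA hX -!mulmxA hY. Qed.

Lemma K_bd g : K g -> bd g.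
Proof.
case/hKdef => f [hf ->]; apply: (big_ind bd) => //.
- by move=> j; rewrite mulmx1 mul1mx.
- exact: bd_mul.
- by move=> l _; apply: (Ks_bd (hf l)).
Qed.

Lemma K_comp g i : K g -> Ks i (blk i g).
Proof.
case/hKdef => f [hf ->]; rewrite /blk prodK //.
by have := Ks_blk (hf i); rewrite /blk => ->.
Qed.

Lemma K_sub : subgroup K.
Proof. by case: hK. Qed.

Lemma K_of_blocks (f : 'I_n -> 'M[k]_N) : (forall i, Ks i (f i)) -> K (\sum_i B i *m f i).
Proof.
move=> hf; apply/hKdef; exists f; split => //.
rewrite [RHS](sum_B); apply: eq_bigr => i _; by rewrite prodK.
Qed.

Lemma Ks_K i g : Ks i g -> K g.
Proof.
move=> hg.
pose f := fun j => if j == i then g else 1%:M.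
have hf : forall j, Ks j (f j).
  by move=> j; rewrite /f; case: eqP => [->//|_]; case: (hKs j).
have := K_of_blocks hf; congr K.
rewrite [RHS](sum_B); apply: eq_bigr => j _; rewrite /f; case: eqVneq => [->//|hj].
by rewrite mulmx1 (Ks_triv hg hj).
Qed.

Lemma K_mul g h : K g -> K h -> K (g *m h).
Proof. by have [_ _ hm _] := K_sub; apply: hm. Qed.

Lemma K_inv g : K g -> K (invmx g).
Proof. by have [_ _ _ hi] := K_sub; apply: hi. Qed.

Lemma K_unit g : K g -> g \in unitmx.
Proof. by have [hu _ _ _] := K_sub; apply: hu. Qed.

Lemma K_zclosed : zclosed K.
Proof. by case: hK. Qed.

Lemma nu_K e D (E : nat -> 'M[k]_N) lam e' D' F mu
  (hE : grading e D E lam) (hF : grading e' D' F mu) (hP : forall a, a != 0 -> Pl mu (lam a)) :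
  (forall a, a != 0 -> K (lam a)) -> (forall b, b != 0 -> K (mu b)) ->
  forall a, a != 0 -> K (nu lam D' F a).
Proof.
move=> hlK hmK a ha.
have htri : tri D' F (lam a) by case/(PlE_g hF): (hP a ha).
have [Q [hQ h0]] := tri_limQ hF htri.
have -> : nu lam D' F a = evalmx Q 0 by rewrite h0.
apply: zclosed_lim K_zclosed _ _.
  move=> b hb; rewrite -hQ //; apply: K_mul; [apply: K_mul | apply: K_inv]; auto.
rewrite h0 -/(pi D' F (lam a)) -/(nu lam D' F a).
exact: g_unit (nu_grading hE hF hP) a ha.
Qed.

Lemma pi_B e' D' F mu (hF : grading e' D' F mu) j X :
  (forall b, b != 0 -> K (mu b)) -> B j *m pi D' F X = pi D' F (B j *m X).
Proof.
move=> hmK.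
have hc : forall q, (q < D')%N -> B j *m F q = F q *m B j.
  apply: (coef_comm hF) => b hb; exact: (K_bd (hmK b hb) j).
rewrite /pi mulmx_sumr; apply: eq_bigr => q _.
by rewrite !mulmxA hc.
Qed.

Lemma pi_Bj e' D' F mu (hF : grading e' D' F mu) j :
  (forall b, b != 0 -> K (mu b)) -> pi D' F (B j) = B j.
Proof.
move=> hmK; rewrite -[B j in LHS]mulmx1 -(pi_B hF _ _ hmK) (pi1 hF) mulmx1 //.
Qed.

Lemma fwd : rel_Gcr H K -> forall i, rel_Gcr H (Ks i).
Proof.
move=> hR i lam [hlc hlK] hHP.
have hlK' : cocharacter_of K lam by split => // a ha; apply: Ks_K (hlK a ha).
case: (hR lam hlK' hHP) => mu [[hmc hmK] hPeq hHL].
have [e [D [E hE]]] := grading_exists hlc.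
have [e' [D' [F hF]]] := grading_exists hmc.
have hP : forall a, a != 0 -> Pl mu (lam a).
  by move=> a ha; apply/hPeq; apply: Ll_Pl; apply: Ll_self.
have hnug := nu_grading hE hF hP.
have hlu : forall a, a != 0 -> lam a \in unitmx by apply: g_unit hE.
have hPu : Pl lam (uu D E D' F) by apply/hPeq; exact: Pl_mu_uu hE hF hP.
have hPeq' : forall g, Pl lam g <-> Pl (nu lam D' F) g.
  move=> g; rewrite (Pl_nu hE hF hP g); split => h.
    exact: Pl_conj hlu hPu h.
  have hu := uu_unit hE hF hP.
  have := Pl_conj hlu (Pl_inv hlu hPu) h.
  by rewrite invmxK !mulmxA mulmxV // mul1mx -mulmxA mulmxV // mulmx1.
exists (nu lam D' F); split.
- split; first exact: grading_cochar hnug.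
  move=> a ha.
  have hKn := nu_K hE hF hP (fun a ha => Ks_K (hlK a ha)) hmK ha.
  have := K_comp i hKn; rewrite blk_id //.
  move=> j hj; rewrite /nu (pi_B hF _ _ hmK) (Ks_triv (hlK a ha) hj).
  exact: pi_Bj hF j hmK.
- exact: hPeq'.
- move=> h hh; apply: (test_Ll hnug hF) (hHL h hh).
    by move=> p q hp hq; rewrite /E' (pi_comm hF _ hq).
  by move=> g /hPeq /hPeq'.
Qed.

Lemma blk_conj_u u X i : u \in unitmx -> bd u -> blk i (u *m X *m invmx u) = u *m blk i X *m invmx u.
Proof.
move=> hu hb; rewrite /blk mulmxDr mulmxDl; congr (_ + _).
  by rewrite !mulmxA hb.
by rewrite mulmxBr mulmx1 mulmxBl mulmxV // -hb mulmxK.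
Qed.

Lemma bwd : (forall i, rel_Gcr H (Ks i)) -> rel_Gcr H K.
Proof.
move=> hall lam [hlc hlK] hHP.
have hlbd : forall a, a != 0 -> bd (lam a) by move=> a ha; apply: K_bd (hlK a ha).
have hlu : forall a, a != 0 -> lam a \in unitmx by move=> a ha; apply: K_unit (hlK a ha).
have hHbd : forall h, H h -> bd h by move=> h hh; apply: blk_comm (hHV hh).
have hHu : forall h, H h -> h \in unitmx by case: hH.
pose lami := fun i a => blk i (lam a).
have hlic : forall i, cocharacter_of (Ks i) (lami i).
  move=> i; split; first exact: blk_cochar hlc hlbd.
  by move=> a ha; apply: K_comp (hlK a ha).
have hHPi : forall i h, H h -> Pl (lami i) h.
  by move=> i h hh; apply: Pl_blk_fwd hlu hlbd (hHbd h hh) (hHP h hh).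
have : forall i, exists mu, [/\ cocharacter_of (Ks i) mu, (forall g, Pl (lami i) g <-> Pl mu g)
     & forall h, H h -> Ll mu h].
  by move=> i; apply: hall i (lami i) (hlic i) (hHPi i).
case/fin_all_exists => mus hmus.
have hmusK : forall i a, a != 0 -> Ks i (mus i a).
  by move=> i a ha; case: (hmus i) => [[_ h] _ _]; apply: h a ha.
have hmusc : forall i, cocharacter (mus i) by move=> i; case: (hmus i) => [[h _] _ _].
have hPi : forall i g, Pl (lami i) g <-> Pl (mus i) g by move=> i; case: (hmus i).
have hLmus : forall i h, H h -> Ll (mus i) h by move=> i; case: (hmus i).
pose mu := fun a => \sum_i B i *m mus i a.
have hmK : forall a, a != 0 -> K (mu a).
  by move=> a ha; apply: K_of_blocks => i; apply: hmusK.
have hBmu : forall i a, a != 0 -> B i *m mu a = B i *m mus i a.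
  move=> i a ha; rewrite /mu mulmx_sumr (bigD1 i) //= mulmxA Bidem big1 ?addr0 //.
  by move=> j hj; rewrite mulmxA BB eq_sym (negbTE hj) mul0mx.
have hblkmu : forall i a, a != 0 -> blk i (mu a) = mus i a.
  by move=> i a ha; rewrite /blk hBmu //; apply: (Ks_blk (hmusK i a ha)).
have hmc : cocharacter mu.
  split.
  - have : forall i, exists eP : nat * 'M[{poly k}]_N,
        forall a, a != 0 -> mus i a = (a ^+ eP.1)^-1 *: evalmx eP.2 a.
      by move=> i; case: (hmusc i) => [[e [P hP]] _ _]; exists (e, P).
    case/fin_all_exists => eP heP.
    pose Em := (\max_i (eP i).1)%N.
    exists Em, (\sum_i 'X^(Em - (eP i).1) *: (cmx (B i) *m (eP i).2)) => a ha.
    rewrite /mu evalmx_sum scaler_sumr; apply: eq_bigr => i _.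
    rewrite heP // evalmxZ evalmxM evalmx_cmx hornerXn scalerA -scalemxAr.
    rewrite exprB ?unitfE //; last exact: (leq_bigmax (F := fun i => (eP i).1) i).
    by rewrite mulKf // expf_neq0.
  - by move=> a ha; apply: K_unit (hmK a ha).
  - move=> a b ha hb.
    have hab : a * b != 0 by rewrite mulf_neq0.
    rewrite {1}/mu mulmx_suml; apply: eq_bigr => i _.
    case: (hmusc i) => _ _ hm.
    rewrite hm // (Ks_bd (hmusK i a ha) i) -!mulmxA hBmu //.
    by rewrite !mulmxA -(Ks_bd (hmusK i a ha) i).
have hmu_u : forall a, a != 0 -> mu a \in unitmx by move=> a ha; apply: K_unit (hmK a ha).
have hmbd : forall a, a != 0 -> bd (mu a) by move=> a ha; apply: K_bd (hmK a ha).
have [e [D [E hE]]] := grading_exists hlc.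
have [e' [D' [F hF]]] := grading_exists hmc.
have hP : forall a, a != 0 -> Pl mu (lam a).
  move=> a ha; apply: (Pl_blk_bwd hmu_u hmbd (hlbd a ha) (hlu a ha)) => i.
  apply: (Pl_ext (c := mus i)); first by move=> b hb; rewrite hblkmu.
  apply/hPi; apply: (Pl_blk_fwd _ hlu hlbd (hlbd a ha)).
  by apply: Ll_Pl; apply: Ll_self.
have hnug := nu_grading hE hF hP.
have hu := uu_unit hE hF hP.
have hub : bd (uu D E D' F).
  move=> j; apply: (comm_uu hE hF) => [a ha|b hb]; [exact: hlbd a ha j | exact: hmbd b hb j].
have hPuMu := Pl_mu_uu hE hF hP.
have hPul : Pl lam (uu D E D' F).
  apply: (Pl_blk_bwd hlu hlbd hub hu) => i; apply/hPi.
  apply: (Pl_ext (c := fun b => blk i (mu b))); first by move=> b hb; rewrite hblkmu.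
  exact: Pl_blk_fwd hmu_u hmbd hub hPuMu.
have hPeq' : forall g, Pl lam g <-> Pl (nu lam D' F) g.
  move=> g; rewrite (Pl_nu hE hF hP g); split => h.
    exact: Pl_conj hlu hPul h.
  have := Pl_conj hlu (Pl_inv hlu hPul) h.
  by rewrite invmxK !mulmxA mulmxV // mul1mx -mulmxA mulmxV // mulmx1.
have hinvb : bd (invmx (uu D E D' F)) by move=> j; apply: comm_inv hu (hub j).
have hnvbd : forall a, a != 0 -> bd (nu lam D' F a).
  move=> a ha; rewrite (nu_conj hE hF hP ha); apply: bd_mul => //.
  by apply: bd_mul => //; apply: hlbd.
exists (nu lam D' F); split.
- split; first exact: grading_cochar hnug.
  exact: nu_K hE hF hP hlK hmK.
- exact: hPeq'.
- move=> h hh.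
  apply: (Ll_blk_bwd (g_unit hnug) hnvbd (hHbd h hh) (hHu h hh)) => i.
  pose nvi := fun a => blk i (nu lam D' F a).
  have hnvic : cocharacter nvi by apply: blk_cochar (grading_cochar hnug) hnvbd.
  have [e1 [D1 [E1 hE1]]] := grading_exists hnvic.
  have [e2 [D2 [F2 hF2]]] := grading_exists (hmusc i).
  apply: (test_Ll hE1 hF2 _ _ (hLmus i h hh)).
    apply: (grading_comm hE1 hF2) => a b ha hb.
    rewrite -hblkmu // /nvi blk_mul ?(hnvbd a ha i) // (nu_mu_comm lam hF a hb).
    by rewrite -blk_mul // (hmbd b hb i).
  move=> g /hPi hg.
  have hlu' : forall a, a != 0 -> lami i a \in unitmx by apply: blk_unit' hlu hlbd.
  have hPui : Pl (lami i) (uu D E D' F) by apply: Pl_blk_fwd hlu hlbd hub hPul.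
  have := Pl_conj_gen hlu' hu (Pl_conj hlu' hPui hg).
  rewrite !mulmxA mulmxV // mul1mx -mulmxA mulmxV // mulmx1.
  apply: Pl_ext => a ha; rewrite /nvi /lami (nu_conj hE hF hP ha) blk_conj_u //.
Qed.

Lemma main : rel_Gcr H K <-> (forall i, rel_Gcr H (Ks i)).
Proof. split; [exact: fwd | exact: bwd]. Qed.

End Blocks.

Unset Implicit Arguments.

Theorem corollary4p7 (k : closedFieldType) (N n : nat)
  (Vs : 'I_n -> 'M[k]_N) (H K : mxset k N) (Ks : 'I_n -> mxset k N) :
  (* V = k^N = (+)_i V_i, V_i = row space of Vs i *)
  mxdirect (\sum_(i < n) Vs i) ->
  row_full (\sum_(i < n) Vs i)%MS ->
  (* H is a subgroup of GL(V) preserving each V_i *)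
  subgroup H ->
  (forall h, H h -> forall i, (Vs i *m h <= Vs i)%MS) ->
  (* K is reductive *)
  reductive K ->
  (* K_i <= GL(V_i), embedded in GL(V) acting trivially on V_j, j <> i *)
  (forall i, subgroup (Ks i)) ->
  (forall i g, Ks i g ->
     (Vs i *m g <= Vs i)%MS /\ (forall j, j != i -> Vs j *m g = Vs j)) ->
  (* K = K_1 x ... x K_n *)
  (forall g, K g <-> exists f : 'I_n -> 'M[k]_N,
       (forall i, Ks i (f i)) /\ g = \big[mulmx/1%:M]_(i < n) f i) ->
  rel_Gcr H K <-> (forall i, rel_Gcr H (Ks i)).
Proof.
move=> hdir hfull hH hHV hK hKs hKsV hKdef.
exact: (main hdir hfull hH hHV hK hKs hKsV hKdef).
Qed.
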